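(* Let $\tau:\mathscr{A}\to\mathbb{C}$ be a linear functional with $|\tau(q)|\le C_0^{\deg q}$ for every monomial $q$, and let $A>1$ with $C_0/A<1/2$. For $g_1,\dots,g_m\in\mathscr{A}_0$ set $$Q_m(g_1,\dots,g_m)=(1\otimes\tau+\tau\otimes1)\Big\{\sum_{i=1}^n\big[(\mathscr{J}\mathscr{D}g_1)\cdots(\mathscr{J}\mathscr{D}g_m)\big]_{ii}\Big\}.$$ Then $$\|Q_m(\Sigma g_1,\dots,\Sigma g_m)\|_A\le2(2A^{-2})^m\prod_{k=1}^m\|g_k\|_A.$$ In particular $(g_1,\dots,g_m)\mapsto Q_m(\Sigma g_1,\dots,\Sigma g_m)$ extends to a bounded multilinear map on $\mathscr{A}_0^{(A)}$ with values in $\mathscr{A}^{(A)}$.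
   Context: $\mathscr{A}=\mathbb{C}\langle X_1,\dots,X_n\rangle$, $\mathscr{A}_0$ the span of monomials of degree $\ge1$. For $P=\sum_q\lambda_q(P)q$, $\|P\|_A=\sum_q|\lambda_q(P)|A^{\deg q}$; $\mathscr{A}^{(A)}$, $\mathscr{A}_0^{(A)}$ the completions. $\Sigma:\mathscr{A}_0\to\mathscr{A}_0$ is defined on monomials by $\Sigma q=q/\deg q$ (the inverse of the operator $\mathscr{N}$ multiplying degree-$k$ monomials by $k$). $\partial_j$: derivation $\mathscr{A}\to\mathscr{A}\otimes\mathscr{A}^{op}$ with $\partial_jX_i=\delta_{ij}1\otimes1$; $\mathscr{D}_jq=\sum_{q=BX_jC}CB$; $\mathscr{J}\mathscr{D}g=(\partial_j\mathscr{D}_ig)_{i,j}\in M_n(\mathscr{A}\otimes\mathscr{A}^{op})$; matrix products use $(a\otimes b)(c\otimes d)=ac\otimes db$. $(1\otimes\tau+\tau\otimes1)(a\otimes b)=a\tau(b)+\tau(a)b$. *)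

(* Defs.v *)
(* Noncommutative polynomials C<X_1..X_n> over a numeric
   closed field R (e.g. algC / C), represented as formal finite sums. *)
From HB Require Import structures.
From mathcomp Require Import all_boot all_order all_algebra.
Set Implicit Arguments. Unset Strict Implicit. Unset Printing Implicit Defensive.
Import Order.TTheory GRing.Theory Num.Theory.
Local Open Scope ring_scope.

(* monomials = words in the letters X_0..X_{n-1} *)
Definition word (n : nat) := seq 'I_n.

Section NC.
Variables (R : numClosedFieldType) (n : nat).
Local Notation word := (word n).
(* elements of A: formal finite linear combinations of monomials *)
Definition ncpoly := seq (R * word).
(* elements of A (x) A^op: formal finite combinations of a (x) b *)
Definition nctens := seq (R * (word * word)).
(* elements of M_n(A (x) A^op) *)
Definition ncmx := 'I_n -> 'I_n -> nctens.

Definition coef (P : ncpoly) (w : word) : R := \sum_(x <- P | x.2 == w) x.1.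
Definition maxdeg (P : ncpoly) : nat := \max_(x <- P) size x.2.
(* ||P||_A = sum_q |lambda_q(P)| A^{deg q} (each word of length <= maxdeg once) *)
Definition normA (A : R) (P : ncpoly) : R :=
  \sum_(k < (maxdeg P).+1) \sum_(w : k.-tuple 'I_n) `|coef P w| * A ^+ k.

Definition in_A0 (P : ncpoly) : Prop := coef P [::] = 0.

Definition Sigma (P : ncpoly) : ncpoly :=
  [seq (x.1 / (size x.2)%:R, x.2) | x <- P].

Definition occ (j : 'I_n) (w : word) : seq nat :=
  [seq p <- iota 0 (size w) | nth j w p == j].

(* cyclic derivative: D_j q = sum_{q = B X_j C} C B *)
Definition cycD_mono (j : 'I_n) (w : word) : seq word :=
  [seq drop p.+1 w ++ take p w | p <- occ j w].
Definition cycD (j : 'I_n) (P : ncpoly) : ncpoly :=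
  flatten [seq [seq (x.1, v) | v <- cycD_mono j x.2] | x <- P].

(* free difference quotient: d_j q = sum_{q = B X_j C} B (x) C *)
Definition nder_mono (j : 'I_n) (w : word) : seq (word * word) :=
  [seq (take p w, drop p.+1 w) | p <- occ j w].
Definition nder (j : 'I_n) (P : ncpoly) : nctens :=
  flatten [seq [seq (x.1, u) | u <- nder_mono j x.2] | x <- P].

Definition JD (g : ncpoly) : ncmx := fun i j => nder j (cycD i g).

(* (a (x) b)(c (x) d) = ac (x) db *)
Definition tmul (s t : nctens) : nctens :=
  [seq (x.1 * y.1, (x.2.1 ++ y.2.1, y.2.2 ++ x.2.2)) | x <- s, y <- t].

Definition mxmul (M N : ncmx) : ncmx :=
  fun i j => flatten [seq tmul (M i k) (N k j) | k <- enum 'I_n].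
Definition mxid : ncmx :=
  fun i j => if i == j then [:: (1, ([::], [::]))] else [::].
Definition mxprod (Ms : seq ncmx) : ncmx := foldr mxmul mxid Ms.
Definition mxtr (M : ncmx) : nctens := flatten [seq M i i | i <- enum 'I_n].

(* (1 (x) tau + tau (x) 1)(a (x) b) = a tau(b) + tau(a) b, where the linear
   functional tau is given by its values on monomials *)
Definition tauE (tau : word -> R) (t : nctens) : ncpoly :=
  flatten [seq [:: (x.1 * tau x.2.2, x.2.1); (x.1 * tau x.2.1, x.2.2)] | x <- t].

Definition Qm (tau : word -> R) (m : nat) (g : 'I_m -> ncpoly) : ncpoly :=
  tauE tau (mxtr (mxprod [seq JD (g k) | k <- enum 'I_m])).

End NC.

(* Main.v *)
Require Import Defs.
From HB Require Import structures.
From mathcomp Require Import all_boot all_order all_algebra.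
From mathcomp Require Import zify ring lra.
Set Implicit Arguments. Unset Strict Implicit. Unset Printing Implicit Defensive.
Import Order.TTheory GRing.Theory Num.Theory.
Local Open Scope ring_scope.



Section Gen.
Variable R : numClosedFieldType.

Definition ev {T : Type} (h : T -> R) (s : seq (R * T)) : R :=
  \sum_(x <- s) x.1 * h x.2.
Definition aev {T : Type} (h : T -> R) (s : seq (R * T)) : R :=
  \sum_(x <- s) `|x.1| * h x.2.
Definition eqv {T : Type} (s s' : seq (R * T)) := forall h, ev h s = ev h s'.

Lemma ev_flatten T (h : T -> R) ss : ev h (flatten ss) = \sum_(s <- ss) ev h s.
Proof. by rewrite /ev big_flatten. Qed.
Lemma aev_flatten T (h : T -> R) ss : aev h (flatten ss) = \sum_(s <- ss) aev h s.
Proof. by rewrite /aev big_flatten. Qed.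

Lemma ev_lin1 T U (G : T -> seq U) (h : U -> R) (s : seq (R * T)) :
  ev h (flatten [seq [seq (x.1, v) | v <- G x.2] | x <- s])
  = ev (fun w => \sum_(v <- G w) h v) s.
Proof.
rewrite ev_flatten big_map; apply: eq_bigr => x _.
by rewrite /ev big_map mulr_sumr.
Qed.
Lemma aev_lin1 T U (G : T -> seq U) (h : U -> R) (s : seq (R * T)) :
  aev h (flatten [seq [seq (x.1, v) | v <- G x.2] | x <- s])
  = aev (fun w => \sum_(v <- G w) h v) s.
Proof.
rewrite aev_flatten big_map; apply: eq_bigr => x _.
by rewrite /aev big_map mulr_sumr.
Qed.

Lemma aev_ge0 T (h : T -> R) s : (forall t, 0 <= h t) -> 0 <= aev h s.
Proof. by move=> H; apply: sumr_ge0 => x _; rewrite mulr_ge0. Qed.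

Lemma aev_sum T (I : finType) (f : I -> T -> R) s :
  aev (fun w => \sum_i f i w) s = \sum_i aev (f i) s.
Proof.
rewrite /aev exchange_big /=; apply: eq_bigr => x _; by rewrite mulr_sumr.
Qed.

Lemma aev_le T (h h' : T -> R) s : (forall t, h t <= h' t) -> aev h s <= aev h' s.
Proof. by move=> H; apply: ler_sum => x _; rewrite ler_wpM2l. Qed.

End Gen.



Section Eqv.
Variables (R : numClosedFieldType) (n : nat).

Lemma eqv_Sigma (P P' : ncpoly R n) : eqv P P' -> eqv (Sigma P) (Sigma P').
Proof.
move=> H h; rewrite /ev !big_map.
have := H (fun w => (size w)%:R^-1 * h w); rewrite /ev => E.
by under eq_bigr do rewrite /= -mulrA; rewrite E; under [RHS]eq_bigr do rewrite /= -mulrA.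
Qed.

Lemma eqv_cycD i (P P' : ncpoly R n) : eqv P P' -> eqv (cycD i P) (cycD i P').
Proof. by move=> H h; rewrite /cycD !ev_lin1. Qed.

Lemma eqv_nder i (P P' : ncpoly R n) : eqv P P' -> eqv (nder i P) (nder i P').
Proof. by move=> H h; rewrite /nder !ev_lin1. Qed.

Lemma ev_tmul (s t : nctens R n) h :
  ev h (tmul s t) = ev (fun a => ev (fun b => h (a.1 ++ b.1, b.2 ++ a.2)) t) s.
Proof.
rewrite /ev /tmul big_allpairs_dep; apply: eq_bigr => x _.
by rewrite mulr_sumr; apply: eq_bigr => y _ /=; rewrite mulrA.
Qed.

Lemma eqv_tmul (s s' t t' : nctens R n) :
  eqv s s' -> eqv t t' -> eqv (tmul s t) (tmul s' t').
Proof.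
move=> Hs Ht h; rewrite !ev_tmul Hs.
by apply: eq_bigr => x _; rewrite Ht.
Qed.

Definition meqv (M N : ncmx R n) := forall i j, eqv (M i j) (N i j).

Lemma eqv_mxmul M M' N N' : meqv M M' -> meqv N N' -> meqv (mxmul M N) (mxmul M' N').
Proof.
move=> HM HN i j h; rewrite /mxmul !ev_flatten !big_map.
by apply: eq_bigr => k _; rewrite (eqv_tmul (HM i k) (HN k j)).
Qed.

Lemma eqv_mxprod (I : Type) (F F' : I -> ncmx R n) (r : seq I) :
  (forall k, meqv (F k) (F' k)) ->
  meqv (mxprod (map F r)) (mxprod (map F' r)).
Proof.
move=> H; elim: r => [|k r IH] /=; first by move=> i j h.
by apply: eqv_mxmul.
Qed.

Lemma eqv_JD (P P' : ncpoly R n) : eqv P P' -> meqv (JD P) (JD P').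
Proof. by move=> H i j; apply: eqv_nder; apply: eqv_cycD. Qed.

Lemma eqv_tauE tau (t t' : nctens R n) : eqv t t' -> eqv (tauE tau t) (tauE tau t').
Proof.
move=> H h; rewrite /tauE !ev_flatten !big_map.
have := H (fun p => tau p.2 * h p.1 + tau p.1 * h p.2); rewrite /ev => E.
rewrite /= in E.
transitivity (\sum_(x <- t) x.1 * (tau x.2.2 * h x.2.1 + tau x.2.1 * h x.2.2)).
  by apply: eq_bigr => x _; rewrite /ev !big_cons big_nil /=; ring.
rewrite E; apply: eq_bigr => x _; rewrite /ev !big_cons big_nil /=; ring.
Qed.

Lemma eqv_mxtr M N : meqv M N -> eqv (mxtr M) (mxtr N).
Proof.
move=> H h; rewrite /mxtr !ev_flatten !big_map.
by apply: eq_bigr => i _; rewrite (H i i).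
Qed.

Lemma eqv_Qm tau m (g g' : 'I_m -> ncpoly R n) :
  (forall k, eqv (g k) (g' k)) -> eqv (Qm tau g) (Qm tau g').
Proof.
move=> H; rewrite /Qm; apply: eqv_tauE; apply: eqv_mxtr; apply: eqv_mxprod.
by move=> k; apply: eqv_JD.
Qed.

End Eqv.



Section Canon.
Variables (R : numClosedFieldType) (n : nat).

Lemma one_word (x : word n) N (F : word n -> R) :
  \sum_(k < N.+1) \sum_(w : k.-tuple 'I_n) (x == tval w)%:R * F (tval w)
  = (size x <= N)%:R * F x.
Proof.
have inner k : \sum_(w : k.-tuple 'I_n) (x == tval w)%:R * F (tval w)
               = (size x == k)%:R * F x.
  case: (eqVneq (size x) k) => [Hk|Hk].
  - pose t : k.-tuple 'I_n := @Tuple k _ x (introT eqP Hk).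
    rewrite (bigD1 t) //= eqxx mul1r big1 ?addr0 //.
    move=> w Hw; rewrite (_ : (x == tval w) = false) ?mul0r //.
    by rewrite (_ : x = tval t) // val_eqE eq_sym (negbTE Hw).
  - rewrite mul0r big1 // => w _.
    rewrite (_ : (x == tval w) = false) ?mul0r //.
    by apply/eqP => E; move: Hk; rewrite E size_tuple eqxx.
under eq_bigr do rewrite inner.
rewrite -mulr_suml; congr (_ * _).
case: (leqP (size x) N) => H.
- rewrite (bigD1 (Ordinal (H : (size x < N.+1)%N))) //= eqxx big1 ?addr0 //.
  move=> k Hk; rewrite (_ : (size x == k) = false) //; apply/eqP => E.
  by move/eqP: Hk; apply; apply: val_inj => /=; rewrite E.
- rewrite big1 // => k _; rewrite (_ : (size x == k) = false) //.
  by apply/eqP => E; have := ltn_ord k; lia.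
Qed.

Lemma coefE (P : ncpoly R n) w : coef P w = ev (fun v => (v == w)%:R) P.
Proof.
rewrite /coef /ev big_mkcond; apply: eq_bigr => x _.
by case: (x.2 == w) => /=; rewrite ?mulr1 ?mulr0.
Qed.

Lemma normA_le (A : R) (hA : 0 <= A) (P P' : ncpoly R n) :
  eqv P P' -> normA A P <= aev (fun w => A ^+ size w) P'.
Proof.
move=> H; rewrite /normA.
apply: le_trans (_ : _ <= \sum_(k < (maxdeg P).+1) \sum_(w : k.-tuple 'I_n)
   \sum_(x <- P') `|x.1| * ((x.2 == tval w)%:R * A ^+ size (tval w))) _.
  apply: ler_sum => k _; apply: ler_sum => w _.
  rewrite coefE H size_tuple.
  under [X in _ <= X]eq_bigr do rewrite mulrA.
  rewrite -mulr_suml; apply: ler_wpM2r; first exact: exprn_ge0.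
  apply: le_trans (ler_norm_sum _ _ _) _; apply: ler_sum => x _.
  by rewrite normrM normr_nat.
rewrite (eq_bigr (fun k : 'I_ _ => \sum_(x <- P') \sum_(w : k.-tuple 'I_n)
   `|x.1| * ((x.2 == tval w)%:R * A ^+ size (tval w)))); last first.
  by move=> k _; rewrite exchange_big.
rewrite exchange_big /=; apply: ler_sum => x _.
under eq_bigr do rewrite -mulr_sumr.
rewrite -mulr_sumr (one_word _ _ (fun v => A ^+ size v)); apply: ler_wpM2l => //.
case: (size x.2 <= _)%N; rewrite ?mul1r ?mul0r //; exact: exprn_ge0.
Qed.

Definition canon (P : ncpoly R n) : ncpoly R n :=
  flatten [seq [seq (coef P (tval w), tval w) | w <- enum {: k.-tuple 'I_n}]
          | k : 'I_(maxdeg P).+1 <- enum 'I_(maxdeg P).+1].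

Lemma aev_canon A P : aev (fun w => A ^+ size w) (canon P) = normA A P.
Proof.
rewrite /aev big_flatten big_map big_enum /=; apply: eq_bigr => k _.
rewrite big_map big_enum; apply: eq_bigr => w _ /=; by rewrite size_tuple.
Qed.

Lemma eqv_canon P : eqv P (canon P).
Proof.
move=> h; rewrite /ev big_flatten big_map big_enum /=.
under [RHS]eq_bigr => k _ do rewrite big_map big_enum /=.
under [RHS]eq_bigr => k _ do under eq_bigr => w _ do rewrite coefE /ev mulr_suml.
rewrite (eq_bigr (fun k : 'I_ _ => \sum_(x <- P) \sum_(w : k.-tuple 'I_n)
   x.1 * ((x.2 == tval w)%:R * h (tval w)))); last first.
  move=> k _; rewrite exchange_big; apply: eq_bigr => x _; apply: eq_bigr => w _.
  by rewrite mulrA.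
rewrite exchange_big /=; apply: eq_big_seq => x Hx.
under eq_bigr do rewrite -mulr_sumr.
rewrite -mulr_sumr (one_word _ _ h).
have -> : (size x.2 <= maxdeg P)%N.
  by rewrite /maxdeg; apply: (@leq_bigmax_seq _ P xpredT (fun x : R * word n => size x.2) x Hx).
by rewrite /= mul1r.
Qed.

End Canon.



Section Geo.
Variables (R : numClosedFieldType) (A C0 : R).
Hypotheses (hA : 0 < A) (hC0 : 0 <= C0) (hCA : C0 * 2 <= A).

Definition gfun (s : nat) : R := \sum_(p < s) C0 ^+ (s - p.+1) * A ^+ p.

Lemma gfun_le s : A * gfun s <= 2 * A ^+ s.
Proof.
elim: s => [|s IH]; first by rewrite /gfun big_ord0 mulr0 expr0 mulr1 ler0n.
rewrite /gfun big_ord_recr /= subnn expr0 mul1r.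
have -> : \sum_(i < s) C0 ^+ (s.+1 - (widen_ord (leqnSn s) i).+1) * A ^+ (widen_ord (leqnSn s) i)
        = C0 * gfun s.
  rewrite /gfun mulr_sumr; apply: eq_bigr => i _ /=.
  rewrite subSS (_ : (s - i)%N = (s - i.+1).+1)%N; last by have := ltn_ord i; lia.
  by rewrite exprS mulrA.
have hAs : 0 <= A ^+ s by rewrite exprn_ge0 // ltW.
have h1 : C0 * (A * gfun s) <= C0 * (2 * A ^+ s) by rewrite ler_wpM2l.
rewrite mulrDr exprS.
have h2 : C0 * (2 * A ^+ s) <= A * A ^+ s.
  by rewrite mulrA; apply: ler_wpM2r.
have -> : A * (C0 * gfun s) = C0 * (A * gfun s) by ring.
apply: le_trans (_ : _ <= A * A ^+ s + A * A ^+ s) _; first by apply: lerD => //; apply: le_trans h2.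
by rewrite mulr2n mulrDl !mul1r.
Qed.

Lemma gfun_le' s : gfun s <= 2 * A ^+ s / A.
Proof. by rewrite ler_pdivlMr // mulrC gfun_le. Qed.

Lemma gfun_rev s : \sum_(p < s) C0 ^+ p * A ^+ (s - p.+1) = gfun s.
Proof.
rewrite /gfun (reindex_inj rev_ord_inj) /=; apply: eq_bigr => i _.
congr (_ * _); congr (_ ^+ _); have := ltn_ord i; simpl; lia.
Qed.

Lemma gfun_ge0 s : 0 <= gfun s.
Proof. by apply: sumr_ge0 => i _; rewrite mulr_ge0 // exprn_ge0 // ltW. Qed.

End Geo.



Section Mat.
Variables (R : numClosedFieldType) (n : nat) (phi : word n * word n -> R).
Hypotheses (hm : forall a b c d, phi (a ++ c, d ++ b) = phi (a, b) * phi (c, d))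
  (h0 : forall p, 0 <= phi p) (h1 : phi ([::], [::]) = 1).

Lemma aev_tmul (s t : nctens R n) : aev phi (tmul s t) = aev phi s * aev phi t.
Proof.
rewrite /aev /tmul big_allpairs_dep mulr_suml; apply: eq_bigr => x _.
rewrite mulr_sumr; apply: eq_bigr => y _ /=.
by rewrite normrM hm -!surjective_pairing; ring.
Qed.

Definition E (M : ncmx R n) i j := aev phi (M i j).
Definition S (M : ncmx R n) := \sum_i \sum_j E M i j.

Lemma E_ge0 M i j : 0 <= E M i j.
Proof. exact: aev_ge0. Qed.
Lemma S_ge0 M : 0 <= S M.
Proof. by apply: sumr_ge0 => i _; apply: sumr_ge0 => j _; apply: E_ge0. Qed.

Lemma E_mxmul M N i j : E (mxmul M N) i j = \sum_k E M i k * E N k j.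
Proof.
by rewrite /E /mxmul aev_flatten big_map big_enum /=; apply: eq_bigr => k _; rewrite aev_tmul.
Qed.

Lemma E_mxid i j : E (@mxid R n) i j = (i == j)%:R.
Proof.
rewrite /E /mxid; case: (i == j); rewrite /aev ?big_cons big_nil //=.
by rewrite normr1 h1 mul1r addr0.
Qed.

Lemma S_mxmul M X : S (mxmul M X) <= S M * S X.
Proof.
rewrite /S mulr_suml; apply: ler_sum => i _.
under eq_bigr do rewrite E_mxmul.
rewrite exchange_big /= mulr_suml; apply: ler_sum => k _.
rewrite -mulr_sumr; apply: ler_wpM2l; first exact: E_ge0.
rewrite [X in _ <= X](bigD1 k) //= lerDl; apply: sumr_ge0 => k' _; apply: sumr_ge0 => j _.
exact: E_ge0.
Qed.

Lemma S_mxmul1 M : S (mxmul M (@mxid R n)) = S M.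
Proof.
rewrite /S; apply: eq_bigr => i _; apply: eq_bigr => j _.
rewrite E_mxmul (bigD1 j) //= E_mxid eqxx mulr1 big1 ?addr0 // => k Hk.
by rewrite E_mxid (negbTE Hk) mulr0.
Qed.

Lemma S_prod M Ms : S (mxprod (M :: Ms)) <= \prod_(N <- M :: Ms) S N.
Proof.
elim: Ms M => [|M' Ms IH] M.
  by rewrite /= S_mxmul1 big_seq1.
rewrite big_cons; apply: le_trans (S_mxmul _ _) _.
by apply: ler_wpM2l; [exact: S_ge0 | exact: IH].
Qed.

Lemma tr_le M : \sum_i E M i i <= S M.
Proof.
apply: ler_sum => i _; rewrite (bigD1 i) //= lerDl.
by apply: sumr_ge0 => j _; apply: E_ge0.
Qed.

Lemma aev_mxtr (M : ncmx R n) : aev phi (mxtr M) = \sum_i E M i i.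
Proof. by rewrite /mxtr aev_flatten big_map big_enum. Qed.

End Mat.



Section Pos.
Variables (R : numClosedFieldType) (n : nat).

Lemma pos_sum (w : word n) (F : nat -> R) :
  \sum_(j : 'I_n) \sum_(p <- occ j w) F p = \sum_(p < size w) F p.
Proof.
rewrite /occ.
under eq_bigr do rewrite big_filter big_mkcond.
rewrite exchange_big /=.
rewrite -(big_mkord xpredT F) /index_iota subn0 big_seq [RHS]big_seq.
apply: eq_bigr => p; rewrite mem_iota add0n => /andP [_ Hp].
case: w Hp => [//|a w'] Hp.
under eq_bigr do rewrite (set_nth_default a) //.
rewrite (bigD1 (nth a (a :: w') p)) //= eqxx big1 ?addr0 // => j Hj.
by rewrite eq_sym (negbTE Hj).
Qed.

End Pos.

Section JDB.
Variables (R : numClosedFieldType) (n : nat) (A : R) (phi : word n * word n -> R).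
Hypotheses (hA : 0 < A) (h0 : forall p, 0 <= phi p)
  (hG : forall v : word n, \sum_(p < size v) phi (take p v, drop p.+1 v) <= 2 * A ^+ size v / A).

Lemma nder_sum (Q : ncpoly R n) :
  \sum_j aev phi (nder j Q) = aev (fun v => \sum_(p < size v) phi (take p v, drop p.+1 v)) Q.
Proof.
under eq_bigr do rewrite /nder aev_lin1.
rewrite -(aev_sum (fun j v => \sum_(u <- nder_mono j v) phi u)).
apply: eq_bigr => x _; congr (_ * _).
by under eq_bigr do rewrite /nder_mono big_map; rewrite pos_sum.
Qed.

Lemma cycD_sum (psi : word n -> R) (Q : ncpoly R n) :
  \sum_i aev psi (cycD i Q) = aev (fun w => \sum_(p < size w) psi (drop p.+1 w ++ take p w)) Q.
Proof.
under eq_bigr do rewrite /cycD aev_lin1.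
rewrite -(aev_sum (fun j v => \sum_(u <- cycD_mono j v) psi u)).
apply: eq_bigr => x _; congr (_ * _).
by under eq_bigr do rewrite /cycD_mono big_map; rewrite (pos_sum _ (fun p => psi (drop p.+1 x.2 ++ take p x.2))).
Qed.

Lemma aev_Sigma (psi : word n -> R) (P : ncpoly R n) :
  aev psi (Sigma P) = aev (fun w => psi w / (size w)%:R) P.
Proof.
rewrite /aev big_map; apply: eq_bigr => x _ /=.
by rewrite normrM normfV normr_nat; ring.
Qed.

Lemma aux (F a d c B : R) : 0 <= a -> F / d <= c * B -> a * (F / d) <= c * (a * B).
Proof.
move=> ha H; rewrite [X in _ <= X]mulrCA; exact: ler_wpM2l.
Qed.

Lemma S_JD (P : ncpoly R n) :
  S phi (JD (Sigma P)) <= 2 / A ^+ 2 * aev (fun w => A ^+ size w) P.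
Proof.
rewrite /S /E /JD.
under eq_bigr do rewrite nder_sum.
rewrite cycD_sum aev_Sigma.
rewrite /aev mulr_sumr; apply: ler_sum => x _.
apply: aux; first exact: normr_ge0.
set w := x.2.
case hw: (size w) => [|s].
  by rewrite big_ord0 mul0r expr0 mulr1 divr_ge0 // exprn_ge0 // ltW.
apply: le_trans (_ : _ <= (\sum_(p < s.+1) (2 * A ^+ s / A)) / s.+1%:R) _.
  apply: ler_wpM2r; first by rewrite invr_ge0 ler0n.
  apply: ler_sum => p _.
  have Hs : size (drop p.+1 w ++ take p w) = s.
    rewrite size_cat size_drop size_takel; last by rewrite hw; have := ltn_ord p; lia.
    rewrite hw; have := ltn_ord p; lia.
  by apply: le_trans (hG (drop p.+1 w ++ take p w)) _; rewrite Hs.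
have E c : c *+ s.+1 / s.+1%:R = c :> R.
  by rewrite -mulr_natr mulfK // pnatr_eq0.
rewrite sumr_const card_ord E.
have hA0 : A != 0 by rewrite gt_eqF.
rewrite le_eqVlt; apply/orP; left; apply/eqP.
rewrite [A ^+ s.+1]exprS expr2; field; exact: hA0.
Qed.

End JDB.



Section Core.
Variables (R : numClosedFieldType) (n : nat) (tau : word n -> R) (A C0 : R).
Hypotheses (hA : 0 < A) (hC0 : 0 <= C0) (hCA : C0 * 2 <= A)
  (htau : forall q : word n, `|tau q| <= C0 ^+ size q).

Definition uw (p : word n * word n) := C0 ^+ size p.2 * A ^+ size p.1.
Definition vw (p : word n * word n) := C0 ^+ size p.1 * A ^+ size p.2.

Lemma tauE_bound (t : nctens R n) :
  aev (fun w : word n => A ^+ size w) (tauE tau t) <= aev uw t + aev vw t.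
Proof.
rewrite /aev big_flatten big_map -big_split /=; apply: ler_sum => x _.
rewrite !big_cons big_nil addr0 /= /uw /vw; apply: lerD.
  rewrite normrM -mulrA; apply: ler_wpM2l => //; apply: ler_wpM2r => //.
  by rewrite exprn_ge0 // ltW.
rewrite normrM -mulrA; apply: ler_wpM2l => //; apply: ler_wpM2r => //.
by rewrite exprn_ge0 // ltW.
Qed.

Lemma uw_mul a b c d : uw (a ++ c, d ++ b) = uw (a, b) * uw (c, d).
Proof. by rewrite /uw /= !size_cat !exprD; ring. Qed.
Lemma vw_mul a b c d : vw (a ++ c, d ++ b) = vw (a, b) * vw (c, d).
Proof. by rewrite /vw /= !size_cat !exprD; ring. Qed.
Lemma uw_ge0 p : 0 <= uw p.
Proof. by rewrite /uw mulr_ge0 // exprn_ge0 // ltW. Qed.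
Lemma vw_ge0 p : 0 <= vw p.
Proof. by rewrite /vw mulr_ge0 // exprn_ge0 // ltW. Qed.
Lemma uw1 : uw ([::], [::]) = 1.
Proof. by rewrite /uw /= !expr0 mulr1. Qed.
Lemma vw1 : vw ([::], [::]) = 1.
Proof. by rewrite /vw /= !expr0 mulr1. Qed.

Lemma uw_G (v : word n) :
  \sum_(p < size v) uw (take p v, drop p.+1 v) <= 2 * A ^+ size v / A.
Proof.
apply: le_trans (gfun_le' hA hC0 hCA (size v)).
rewrite le_eqVlt; apply/orP; left; apply/eqP.
apply: eq_bigr => p _; rewrite /uw /= size_drop size_takel //.
exact: ltnW.
Qed.

Lemma vw_G (v : word n) :
  \sum_(p < size v) vw (take p v, drop p.+1 v) <= 2 * A ^+ size v / A.
Proof.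
apply: le_trans (gfun_le' hA hC0 hCA (size v)).
rewrite -(gfun_rev hA hC0 hCA) le_eqVlt; apply/orP; left; apply/eqP.
apply: eq_bigr => p _; rewrite /vw /= size_drop size_takel //.
exact: ltnW.
Qed.

Section Phi.
Variable phi : word n * word n -> R.
Hypotheses (hm : forall a b c d, phi (a ++ c, d ++ b) = phi (a, b) * phi (c, d))
  (h0 : forall p, 0 <= phi p) (h1 : phi ([::], [::]) = 1)
  (hG : forall v : word n, \sum_(p < size v) phi (take p v, drop p.+1 v) <= 2 * A ^+ size v / A).

Lemma S_prod' (Ms : seq (ncmx R n)) :
  (0 < size Ms)%N -> S phi (mxprod Ms) <= \prod_(N <- Ms) S phi N.
Proof. case: Ms => [//|M Ms] _; exact: S_prod. Qed.

Lemma phi_bound m (h : 'I_m -> ncpoly R n) : (0 < m)%N ->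
  aev phi (mxtr (mxprod [seq JD (Sigma (h k)) | k <- enum 'I_m]))
  <= (2 / A ^+ 2) ^+ m * \prod_(k < m) aev (fun w => A ^+ size w) (h k).
Proof.
move=> hm0.
rewrite aev_mxtr; apply: le_trans (tr_le _ _) _; first exact: h0.
apply: le_trans (S_prod' _) _; first by rewrite size_map size_enum_ord.
rewrite big_map big_enum /=.
apply: le_trans (_ : _ <= \prod_(k < m) (2 / A ^+ 2 * aev (fun w => A ^+ size w) (h k))) _.
  apply: ler_prod => k _; rewrite S_ge0 //=; exact: S_JD.
by rewrite big_split /= prodr_const card_ord.
Qed.

End Phi.

Lemma core m (h : 'I_m -> ncpoly R n) : (0 < m)%N ->
  aev (fun w => A ^+ size w) (Qm tau (fun k => Sigma (h k)))
  <= 2 * (2 / A ^+ 2) ^+ m * \prod_(k < m) aev (fun w => A ^+ size w) (h k).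
Proof.
move=> hm0; rewrite /Qm; apply: le_trans (tauE_bound _) _.
rewrite -mulrA mulr2n mulrDl mul1r; apply: lerD.
  by apply: phi_bound => //; [exact: uw_mul | exact: uw_ge0 | exact: uw1 | exact: uw_G].
by apply: phi_bound => //; [exact: vw_mul | exact: vw_ge0 | exact: vw1 | exact: vw_G].
Qed.

End Core.

Theorem mainTheorem8 (R : numClosedFieldType) (n : nat) (tau : word n -> R)
    (C0 A : R) (m : nat) (g : 'I_m -> ncpoly R n) :
  (forall q : word n, `|tau q| <= C0 ^+ size q) ->
  1 < A -> C0 / A < 2^-1 ->
  (0 < m)%N ->
  (forall k, in_A0 (g k)) ->
  normA A (Qm tau (fun k => Sigma (g k)))
    <= 2 * (2 / A ^+ 2) ^+ m * \prod_(k < m) normA A (g k).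
Proof.
move=> htau hA1 hC hm0 _.
have hA : 0 < A by apply: lt_trans hA1.
have hCA : C0 * 2 <= A.
  apply: ltW; move: hC; rewrite ltr_pdivrMr // mulrC -ltr_pdivlMr //.
have key : forall n' (tau' : word n' -> R), (forall q : word n', `|tau' q| <= C0 ^+ size q) ->
    exists C1 : R, [/\ 0 <= C1, C1 * 2 <= A &
    forall q : word n', `|tau' q| <= C1 ^+ size q].
  clear -hA hCA; case=> [|n'] tau' htau'.
    exists 0; split => //; first by rewrite mul0r ltW.
    by case=> [|[] //]; rewrite /= expr0; move: (htau' [::]); rewrite expr0.
  exists C0; split => //.
  by apply: le_trans (htau' [:: ord0]); rewrite normr_ge0.
have [C1 [hC1 hC1A htau1]] := key n tau htau.
apply: le_trans (normA_le (ltW hA) (P' := Qm tau (fun k => Sigma (canon (g k)))) _) _.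
  by apply: eqv_Qm => k; apply: eqv_Sigma; apply: eqv_canon.
apply: le_trans (core hA hC1 hC1A htau1 _ hm0) _.
by under eq_bigr do rewrite aev_canon.
Qed.
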